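(* Suppose the relationship network on $V$ is fixed and known to the designer. For a distinguished agent $k\in V$ define the mechanism $g^{3,k}$ by, for $i\in V\setminus\{k\}$, $$g^{3,k}_i(\mathbf m)=\begin{cases}\dfrac{1}{|\mathrm{posF}(\mathbf m_{F_i\cap F_k})\setminus\{k\}|}, & \text{if } i\in \mathrm{posF}(\mathbf m_{F_k}),\\[2mm] 0,&\text{otherwise,}\end{cases}\qquad g^{3,k}_k(\mathbf m)=1-\sum_{i\in V\setminus\{k\}}g^{3,k}_i(\mathbf m).$$ Then for every $k\in V$, $g^{3,k}$ is valid and DSIC. Moreover, if the Intersection Condition F(k) holds, i.e. $F_i\cap F_j\cap F_k\neq\varnothing$ for all $i,j\in V\setminus\{k\}$ (including $i=j$), then $g^{3,k}$ is efficient.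
   Context: Let $V=\{1,\dots,n\}$ be a finite set of agents. A relationship network on $V$ assigns to every unordered pair of distinct agents exactly one of three symmetric relations: friends, enemies, or impartial. For $i\in V$, $F_i,E_i,I_i$ denote the sets of friends, enemies and impartials of $i$; they partition $V\setminus\{i\}$, and $j\in F_i\iff i\in F_j$ (similarly for $E$ and $I$). A set $N\subseteq V$ is the set of needy agents. Preferences: fix weights $w_f,w_e>0$. For $p,p'\in[0,1]^V$, $p\succ_i p'$ iff either $p_i>p'_i$, or $p_i=p'_i$ and $w_f\sum_{j\in F_i}(p_j-p'_j)-w_e\sum_{j\in E_i}(p_j-p'_j)>0$; $p\succsim_i p'$ means not $p'\succ_i p$. Known-network setting: each agent $i$ sends a message $m_i\subseteq V$ (the set of agents $i$ reports as needy; $j\in m_i$ is a positive vote of $i$ on $j$). A message profile is $\mathbf m=(m_i)_{i\in V}$; for $X\subseteq V$, $\mathbf m_X=(m_j)_{j\in X}$. A mechanism is a function $g:(2^V)^V\to[0,1]^V$; it is valid if $\sum_{i\in V}g_i(\mathbf m)\le 1$ for all $\mathbf m$; it is DSIC if for all $i\in V$, all profiles $\mathbf m$ and all $m'_i\subseteq V$, $g(\mathbf m)\succsim_i g(m'_i,\mathbf m_{-i})$; it is efficient if for every nonempty $N\subseteq V$, at the truthful profile $\mathbf m$ with $m_j=N$ for all $j$, $\sum_{i\in N}g_i(\mathbf m)=1$. For $X\subseteq V$, $\mathrm{posF}(\mathbf m_X)$ is the set of agents $j\in V$ such that $j\in m_l$ for every $l\in X\cap F_j$ (i.e. $j$ receives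 positive votes from all its friends in $X$). *)

(* Defs.v *)
From HB Require Import structures.
From mathcomp Require Import all_boot all_order all_algebra.
Set Implicit Arguments. Unset Strict Implicit. Unset Printing Implicit Defensive.
Import Order.TTheory GRing.Theory Num.Theory.
Local Open Scope ring_scope.

Inductive relkind := Friend | Enemy | Impartial.
Definition relkind_eqb (a b : relkind) : bool :=
  match a, b with
  | Friend, Friend | Enemy, Enemy | Impartial, Impartial => true
  | _, _ => false end.
Lemma relkind_eqP : Equality.axiom relkind_eqb.
Proof. by case; case; constructor. Qed.
HB.instance Definition _ := hasDecEq.Build relkind relkind_eqP.

(* A relationship network on V = 'I_n: net i j is the relation between i and j
   (the diagonal value is irrelevant). *)
Definition network (n : nat) := 'I_n -> 'I_n -> relkind.
Definition sym_network n (net : network n) := forall i j, net i j = net j i.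

Definition friends n (net : network n) (i : 'I_n) : {set 'I_n} :=
  [set j | (j != i) && (net i j == Friend)].
Definition enemies n (net : network n) (i : 'I_n) : {set 'I_n} :=
  [set j | (j != i) && (net i j == Enemy)].

Definition profile n := 'I_n -> {set 'I_n}.
Definition mechanism (R : realFieldType) n := profile n -> 'I_n -> R.

Definition upd n (m : profile n) (i : 'I_n) (mi : {set 'I_n}) : profile n :=
  fun j => if j == i then mi else m j.

Definition posF n (net : network n) (m : profile n) (X : {set 'I_n}) : {set 'I_n} :=
  [set j | [forall l in X :&: friends net j, j \in m l]].

Definition spref (R : realFieldType) n (net : network n) (wf we : R) (i : 'I_n)
  (p p' : 'I_n -> R) : Prop :=
  p' i < p i \/
  (p i = p' i /\
   0 < wf * (\sum_(j in friends net i) (p j - p' j))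
       - we * (\sum_(j in enemies net i) (p j - p' j))).

Definition is_mech (R : realFieldType) n (g : mechanism R n) : Prop :=
  forall m i, 0 <= g m i <= 1.

Definition valid (R : realFieldType) n (g : mechanism R n) : Prop :=
  forall m, \sum_i g m i <= 1.

Definition DSIC (R : realFieldType) n (net : network n) (wf we : R)
  (g : mechanism R n) : Prop :=
  forall i m mi', ~ spref net wf we i (g (upd m i mi')) (g m).

Definition efficient (R : realFieldType) n (g : mechanism R n) : Prop :=
  forall N : {set 'I_n}, N != set0 ->
    \sum_(i in N) g (fun _ => N) i = 1.

Definition g3 (R : realFieldType) n (net : network n) (k : 'I_n) : mechanism R n :=
  fun m =>
    let gi (i : 'I_n) : R :=
      if i \in posF net m (friends net k)
      then (#|posF net m (friends net i :&: friends net k) :\ k|%:R)^-1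
      else 0 in
    fun i => if i == k then 1 - \sum_(j | j != k) gi j else gi i.

Definition intersection_cond n (net : network n) (k : 'I_n) : Prop :=
  forall i j, i != k -> j != k ->
    friends net i :&: friends net j :&: friends net k != set0.

(* Main.v *)
Require Import Defs.
From mathcomp Require Import all_boot all_order all_algebra.
Import Order.TTheory GRing.Theory Num.Theory.
Local Open Scope ring_scope.

Section Aux.
Variables (R : realFieldType) (n : nat) (net : network n) (k : 'I_n).
Hypothesis Hsym : sym_network net.

Definition gi (m : profile n) (i : 'I_n) : R :=
  if i \in posF net m (friends net k)
  then (#|posF net m (friends net i :&: friends net k) :\ k|%:R)^-1 else 0.

Lemma g3E_k m : g3 R net k m k = 1 - \sum_(j | j != k) gi m j.
Proof. by rewrite /g3 eqxx. Qed.

Lemma g3E_i m i : i != k -> g3 R net k m i = gi m i.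
Proof. by move=> H; rewrite /g3 (negbTE H). Qed.

Lemma gi_ge0 m i : 0 <= gi m i.
Proof. by rewrite /gi; case: ifP => // _; rewrite invr_ge0 ler0n. Qed.

Lemma fr_sym i j : (j \in friends net i) = (i \in friends net j).
Proof. by rewrite !inE eq_sym Hsym. Qed.

Lemma posF_anti m (X Y : {set 'I_n}) : X \subset Y ->
  posF net m Y \subset posF net m X.
Proof.
move=> /subsetP XY; apply/subsetP => j; rewrite !inE => /forallP H.
apply/forallP => l; apply/implyP => Hl; move: (H l); rewrite inE.
case/setIP: Hl => /XY -> ->; done.
Qed.

Lemma sum_gi_le1 m : \sum_(j | j != k) gi m j <= 1.
Proof.
set S := posF net m (friends net k) :\ k.
apply: (@le_trans _ _ (\sum_(j | j != k) (if j \in S then (#|S|%:R)^-1 else 0))).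
  apply: ler_sum => j Hj; rewrite /gi; case: ifP => HP; last by case: (j \in S) => //; rewrite invr_ge0 ler0n.
  have HS : j \in S by rewrite /S in_setD1 Hj HP.
  rewrite HS; rewrite lef_pV2 ?ler_nat //.
  - apply: subset_leq_card; apply: setSD; apply: posF_anti; exact: subsetIr.
  - rewrite posrE ltr0n card_gt0; apply/set0Pn; exists j.
    rewrite in_setD1 Hj /=.
    have := subsetP (posF_anti m _ _ (subsetIr (friends net j) (friends net k))); apply.
    exact: HP.
  - by rewrite posrE ltr0n card_gt0; apply/set0Pn; exists j.
rewrite -big_mkcondr /=.
rewrite (eq_bigl (fun j => j \in S)); last first.
  by move=> j; apply/andP/idP => [[]//|H]; split => //; move: H; rewrite in_setD1 => /andP[].
rewrite sumr_const; case: (posnP #|S|) => [->|H]; first by rewrite mulr0n ler01.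
by rewrite -[_ *+ _]mulr_natl mulfV // pnatr_eq0 -lt0n H.
Qed.

Lemma sum_g3 m : \sum_i g3 R net k m i = 1.
Proof.
rewrite (bigD1 k) //= g3E_k.
rewrite (eq_bigr (gi m)); last by move=> j Hj; rewrite g3E_i.
by rewrite subrK.
Qed.

Lemma posF_mem_ext m m' (X : {set 'I_n}) j :
  (forall l, l \in X :&: friends net j -> m l = m' l) ->
  (j \in posF net m X) = (j \in posF net m' X).
Proof.
move=> H; rewrite !inE; apply: eq_forallb => l.
by case: (boolP (l \in X :&: friends net j)) => //= Hl; rewrite H.
Qed.

Lemma posF_ext m m' (X : {set 'I_n}) :
  (forall l, l \in X -> m l = m' l) -> posF net m X = posF net m' X.
Proof.
move=> H; apply/setP => j; apply: posF_mem_ext => l /setIP [Hl _]; exact: H.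
Qed.

Lemma gi_local m m' j :
  (forall l, l \in friends net j :&: friends net k -> m l = m' l) ->
  gi m j = gi m' j.
Proof.
move=> H; rewrite /gi (posF_mem_ext m m'); last first.
  by move=> l Hl; apply: H; rewrite setIC.
rewrite (posF_ext m m') //.
Qed.

End Aux.

Theorem theorem3 (R : realFieldType) (n : nat) (net : network n)
  (Hsym : sym_network net) (wf we : R) (Hwf : 0 < wf) (Hwe : 0 < we) (k : 'I_n) :
  [/\ is_mech (g3 R net k), valid (g3 R net k), DSIC net wf we (g3 R net k)
    & (intersection_cond net k -> efficient (g3 R net k))].
Proof.
split.
- move=> m i; case: (eqVneq i k) => [->|Hik].
    rewrite g3E_k subr_ge0 sum_gi_le1 /= lerBlDr lerDl.
    by apply: sumr_ge0 => j _; apply: gi_ge0.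
  rewrite g3E_i // gi_ge0 /=; apply: (le_trans _ (sum_gi_le1 R n net k m)).
  rewrite (bigD1 i) //= lerDl; by apply: sumr_ge0 => j _; apply: gi_ge0.
- by move=> m; rewrite sum_g3.
- move=> i m mi'.
  set m' := upd m i mi'.
  have Hd : forall j, i \notin friends net j :&: friends net k ->
      gi R n net k m' j = gi R n net k m j.
    move=> j Hj; apply: gi_local => l Hl.
    rewrite /m' /upd; case: eqP => // E; by rewrite -E Hl in Hj.
  have HA : forall j, j \notin friends net i -> g3 R net k m' j = g3 R net k m j.
    move=> j Hj; case: (boolP (i \in friends net k)) => Hik.
      have Hkj : j != k by apply: contraNneq Hj => ->; rewrite (fr_sym _ _ Hsym).
      rewrite !g3E_i //; apply: Hd; rewrite inE negb_and -(fr_sym _ _ Hsym) // Hj.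
      done.
    have Hall : forall j', gi R n net k m' j' = gi R n net k m j'.
      by move=> j'; apply: Hd; rewrite inE negb_and Hik orbT.
    rewrite /g3; case: eqP => _; last exact: Hall.
    by congr (_ - _); apply: eq_bigr => j' _; apply: Hall.
  have Hi : i \notin friends net i by rewrite inE eqxx.
  have HB : \sum_(j in enemies net i) (g3 R net k m' j - g3 R net k m j) = 0.
    apply: big1 => j; rewrite inE => /andP [_ /eqP E]; rewrite HA ?subrr //.
    by rewrite inE E andbF.
  have HC : \sum_(j in friends net i) (g3 R net k m' j - g3 R net k m j) = 0.
    have Htot : \sum_j (g3 R net k m' j - g3 R net k m j) = 0.
      by rewrite sumrB !sum_g3 subrr.
    rewrite (bigID (fun j => j \in friends net i)) /= in Htot.
    rewrite [X in _ + X = _]big1 ?addr0 in Htot; first exact: Htot.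
    by move=> j Hj; rewrite HA ?subrr.
  rewrite /spref HB HC !mulr0 subrr ltxx HA //.
  by rewrite ltxx; case => // [[]].
- move=> IC N HN.
  set m0 : profile n := fun _ => N.
  have Pa : forall X j, j \in N -> j \in posF net m0 X.
    by move=> X j Hj; rewrite inE; apply/forallP => l; rewrite implybE Hj orbT.
  have Pb : forall X j, X :&: friends net j != set0 -> j \notin N ->
      j \notin posF net m0 X.
    move=> X j /set0Pn [l Hl] HjN; rewrite inE negb_forall; apply/existsP.
    by exists l; rewrite Hl.
  case: (boolP (k \in N)) => HkN.
    have H0 : forall i, i \notin N -> g3 R net k m0 i = 0.
      move=> i HiN; have Hik : i != k by apply: contraNneq HiN => ->.
      rewrite g3E_i // /gi ifF //; apply: negbTE; apply: Pb HiN.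
      have := IC i i Hik Hik; rewrite setIid setIC; done.
    have := sum_g3 R n net k m0; rewrite (bigID (fun i => i \in N)) /=.
    rewrite [X in _ + X]big1 ?addr0 //.
  have Hc : forall i, i \in N ->
      posF net m0 (friends net i :&: friends net k) :\ k = N.
    move=> i HiN; have Hik : i != k by apply: contraNneq HkN => <-.
    apply/setP => j; rewrite in_setD1.
    case: (boolP (j \in N)) => HjN.
      rewrite Pa // andbT; by apply: contraNneq HkN => <-.
    case: eqP => //= /eqP Hjk; apply: negbTE; apply: Pb HjN.
    by have := IC i j Hik Hjk; rewrite -setIA [friends net j :&: _]setIC setIA.
  rewrite (eq_bigr (fun _ => (#|N|%:R)^-1)); last first.
    move=> i HiN; have Hik : i != k by apply: contraNneq HkN => <-.
    by rewrite g3E_i // /gi Pa // Hc.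
  rewrite sumr_const -[_ *+ _]mulr_natl mulfV // pnatr_eq0 -lt0n card_gt0 //.
Qed.
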